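(* Let $g\in\mathbb{C}[\alpha,x^{\pm}]^s$ and $\mathcal{A}\subseteq\mathbb{C}^\ell$. Suppose that for some $\alpha^*\in\mathcal{A}$ the system $g_{\alpha^*}(x)=0$ has a nondegenerate solution in $(\mathbb{C}^* )^n$. Then (i) $\mathcal{D}_{g,\mathcal{A}}$ has nonempty Euclidean interior in $\mathcal{A}$; (ii) if in addition $\mathcal{A}$ is locally Zariski dense in $\mathbb{C}^\ell$, then $\mathcal{D}_{g,\mathcal{A}}$ is Zariski dense in $\mathbb{C}^\ell$.
   Context: Let $g\in\mathbb{C}[\alpha_1,\dots,\alpha_\ell,x_1^{\pm1},\dots,x_n^{\pm1}]^s$, $g_\alpha=g(\alpha,\cdot)$, $\mathbb{V}_{\mathbb{C}^*}(g_\alpha)=\{x\in(\mathbb{C}^* )^n: g_\alpha(x)=0\}$, and $\mathcal{D}_{g,\mathcal{A}}=\{\alpha\in\mathcal{A}:\mathbb{V}_{\mathbb{C}^*}(g_\alpha)\neq\emptyset\}$. A solution $x^*$ of a system $h(x)=0$ with $h\in\mathbb{C}[x^{\pm}]^s$ is nondegenerate if the Jacobian matrix $J_h(x^* )$ (with respect to $x$) has rank $s$. A set $X\subseteq\mathbb{C}^m$ is locally Zariski dense if for every Euclidean open $U\subseteq\mathbb{C}^m$ with $U\cap X\neq\emptyset$, the Zariski closure of $U\cap X$ is $\mathbb{C}^m$. *)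

(* Defs.v *)
From HB Require Import structures.
From mathcomp Require Import all_boot all_order all_algebra.
From mathcomp Require Import reals.
From mathcomp Require Import complex.
From mathcomp Require Import mpoly.
Set Implicit Arguments. Unset Strict Implicit. Unset Printing Implicit Defensive.
Import Order.TTheory GRing.Theory Num.Theory.
Local Open Scope ring_scope.
Local Open Scope complex_scope.

Section Defs.
Variable R : realType.
Local Notation C := (R[i]).

Definition cball (m : nat) (z : 'I_m -> C) (e : R) : ('I_m -> C) -> Prop :=
  fun w => forall i, `|w i - z i| < e%:C.

Definition euclid_open (m : nat) (U : ('I_m -> C) -> Prop) : Prop :=
  forall z, U z -> exists2 e : R, 0 < e & forall w, cball z e w -> U w.

Definition nonempty_interior_in (m : nat) (D A : ('I_m -> C) -> Prop) : Prop :=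
  exists z, A z /\ exists2 e : R, 0 < e &
    forall w, cball z e w -> A w -> D w.

(* The Zariski closure of X is C^m iff no nonzero polynomial vanishes on X. *)
Definition zariski_dense (m : nat) (X : ('I_m -> C) -> Prop) : Prop :=
  forall p : {mpoly C[m]}, (forall z, X z -> p.@[z] = 0) -> p = 0.

Definition locally_zariski_dense (m : nat) (X : ('I_m -> C) -> Prop) : Prop :=
  forall U : ('I_m -> C) -> Prop, euclid_open U ->
    (exists z, U z /\ X z) -> zariski_dense (fun z => U z /\ X z).

(* ---------- Laurent polynomials in x with polynomial parameters alpha -------
   An element of C[alpha_1..alpha_l, x_1^{+-1}..x_n^{+-1}] is represented as
   p * x^(-d) with p a polynomial in l+n variables (the first l are alpha,
   the last n are x) and d : 'I_n -> nat a monomial shift.  Every Laurent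
   polynomial has such a representation. *)
Record lpoly (l n : nat) := LPoly { lp_num : {mpoly C[l + n]}; lp_shift : 'I_n -> nat }.

Definition joinv (l n : nat) (a : 'I_l -> C) (x : 'I_n -> C) : 'I_(l + n) -> C :=
  fun k => match split k with inl i => a i | inr j => x j end.

Definition xmon (n : nat) (d : 'I_n -> nat) (x : 'I_n -> C) : C :=
  \prod_(j < n) (x j) ^- (d j).

Definition lpeval (l n : nat) (g : lpoly l n) (a : 'I_l -> C) (x : 'I_n -> C) : C :=
  (lp_num g).@[joinv a x] * xmon (lp_shift g) x.

(* partial derivative w.r.t. x_j, evaluated at (alpha, x):
   d/dx_j (p x^-d) = (d_{x_j} p) x^-d - d_j p x^-d x_j^-1 *)
Definition lpderiv_x (l n : nat) (g : lpoly l n) (j : 'I_n)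
    (a : 'I_l -> C) (x : 'I_n -> C) : C :=
  ((lp_num g)^`M(rshift l j)).@[joinv a x] * xmon (lp_shift g) x
  - (lp_shift g j)%:R * (lp_num g).@[joinv a x] * xmon (lp_shift g) x / x j.

Definition torus (n : nat) (x : 'I_n -> C) : Prop := forall j, x j != 0.

Definition is_solution (l n s : nat) (g : 'I_s -> lpoly l n)
    (a : 'I_l -> C) (x : 'I_n -> C) : Prop :=
  torus x /\ forall i, lpeval (g i) a x = 0.

Definition jacobian_x (l n s : nat) (g : 'I_s -> lpoly l n)
    (a : 'I_l -> C) (x : 'I_n -> C) : 'M[C]_(s, n) :=
  \matrix_(i < s, j < n) lpderiv_x (g i) j a x.

Definition nondegenerate_solution (l n s : nat) (g : 'I_s -> lpoly l n)
    (a : 'I_l -> C) (x : 'I_n -> C) : Prop :=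
  is_solution g a x /\ \rank (jacobian_x g a x) = s.

Definition Dset (l n s : nat) (g : 'I_s -> lpoly l n)
    (A : ('I_l -> C) -> Prop) : ('I_l -> C) -> Prop :=
  fun a => A a /\ exists x, is_solution g a x.

End Defs.

(* Main.v *)
Require Import Defs.
From HB Require Import structures.
From mathcomp Require Import all_boot all_order all_algebra.
From mathcomp Require Import reals complex mpoly.
From mathcomp Require Import ring lra.
From mathcomp Require Import classical_sets.
Set Implicit Arguments. Unset Strict Implicit. Unset Printing Implicit Defensive.
Import Order.TTheory GRing.Theory Num.Theory.
Local Open Scope ring_scope.


Local Open Scope complex_scope.
Section NR.
Variable R : realType.
Local Notation C := (R[i]).

Definition nr (z : C) : R := complex.Re `|z|.

Lemma nrE z : `|z| = (nr z)%:C.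
Proof. by rewrite /nr RRe_real // normr_real. Qed.

Lemma nr_ge0 z : 0 <= nr z.
Proof. by have := normr_ge0 z; rewrite nrE lecR. Qed.

Lemma nrD x y : nr (x + y) <= nr x + nr y.
Proof. by rewrite -lecR rmorphD /= -!nrE ler_normD. Qed.

Lemma nrM x y : nr (x * y) = nr x * nr y.
Proof. by apply: complexI; rewrite rmorphM /= -!nrE normrM. Qed.

Lemma nrN x : nr (- x) = nr x.
Proof. by rewrite /nr normrN. Qed.

Lemma nr0 : nr 0 = 0.
Proof. by rewrite /nr normr0. Qed.

Lemma nr_eq0 x : (nr x == 0) = (x == 0).
Proof. by rewrite -(inj_eq (@complexI R)) -nrE rmorph0 normr_eq0. Qed.

Lemma nrC (k : R) : nr k%:C = `|k|.
Proof.
apply: complexI; rewrite -nrE normc_def /= expr0n /= addr0 sqrtr_sqr //.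
Qed.

Lemma nrB x y : nr (x - y) = nr (y - x).
Proof. by rewrite -nrN opprB. Qed.

Lemma nr_sum (I : finType) (F : I -> C) : nr (\sum_i F i) <= \sum_i nr (F i).
Proof.
elim/big_ind2: _ => //; first by rewrite nr0.
by move=> a b c d h1 h2; apply: le_trans (nrD _ _) (lerD h1 h2).
Qed.

Lemma nr_le_ReIm z : nr z <= `|complex.Re z| + `|complex.Im z|.
Proof.
rewrite {1}[z]complexE; apply: le_trans (nrD _ _) _.
rewrite nrM !nrC /nr normc_def /= expr0n /= add0r expr1n sqrtr1 /= mul1r.
done.
Qed.

Lemma Re_le_nr z : `|complex.Re z| <= nr z.
Proof.
apply: le_trans (_ : nr (complex.Re z)%:C <= _); first by rewrite nrC.
rewrite /nr !normc_def /= expr0n /= addr0 ler_sqrt ?addr_ge0 ?sqr_ge0 //.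
by rewrite lerDl sqr_ge0.
Qed.

Lemma Im_le_nr z : `|complex.Im z| <= nr z.
Proof.
rewrite /nr normc_def /= -sqrtr_sqr ler_sqrt ?addr_ge0 ?sqr_ge0 //.
by rewrite lerDr sqr_ge0.
Qed.

End NR.
Local Close Scope complex_scope.

Section SD.
Variable R : realType.
Local Notation C := (R[i]).
Variable N : nat.
Variable z0 : 'I_N -> C.

Lemma id_add (a b c d la lb : C) :
  a + b - (c + d) - (la + lb) = (a - c - la) + (b - d - lb).
Proof. by ring. Qed.

Lemma id_mul (pz pw qz qw p0 q0 lp lq : C) :
  pz * qz - pw * qw - (q0 * lp + p0 * lq)
  = pz * (qz - qw - lq) + (pz - p0) * lq + qw * (pz - pw - lp) + (qw - q0) * lp.
Proof. by ring. Qed.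

Lemma id_mul3 (a b c d e : C) : (a * b + c * d) * e = b * (a * e) + c * (d * e).
Proof. by ring. Qed.

Lemma id_cont (a b l : C) : a - b = (a - b - l) + l.
Proof. by ring. Qed.

Lemma arith_mul (e1 P Q a b t e : R) : e1 * (P + Q + 2 + a + b) * t <= e * t ->
  (P + 1) * (e1 * t) + e1 * (b * t) + (Q + 1) * (e1 * t) + e1 * (a * t) <= e * t.
Proof. move=> H. apply: le_trans H. rewrite le_eqVlt; apply/orP; left; apply/eqP; ring. Qed.

Definition near (d : R) (z : 'I_N -> C) := forall k, nr (z k - z0 k) < d.

Definition lin (p : {mpoly C[N]}) (h : 'I_N -> C) :=
  \sum_k (p^`M(k)).@[z0] * h k.

Definition Dn (p : {mpoly C[N]}) := \sum_k nr ((p^`M(k)).@[z0]).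

Definition SD (p : {mpoly C[N]}) :=
  forall e : R, 0 < e -> exists2 d : R, 0 < d &
    forall z w (t : R), near d z -> near d w -> 0 <= t ->
     (forall k, nr (z k - w k) <= t) ->
     nr (p.@[z] - p.@[w] - lin p (fun k => z k - w k)) <= e * t.

Lemma Dn_ge0 p : 0 <= Dn p.
Proof. by apply: sumr_ge0 => k _; apply: nr_ge0. Qed.

Lemma lin_bound p h t : (forall k, nr (h k) <= t) -> nr (lin p h) <= Dn p * t.
Proof.
move=> ht; apply: le_trans (nr_sum _) _.
rewrite /Dn mulr_suml; apply: ler_sum => k _.
by rewrite nrM ler_wpM2l ?nr_ge0.
Qed.

Lemma near0 d : 0 < d -> near d z0.
Proof. by move=> d0 k; rewrite subrr nr0. Qed.

Lemma near_le d d' z : d <= d' -> near d z -> near d' z.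
Proof. by move=> le h k; apply: lt_le_trans (h k) le. Qed.

Lemma SD_cont p : SD p -> forall e : R, 0 < e -> exists2 d : R, 0 < d &
  forall z, near d z -> nr (p.@[z] - p.@[z0]) <= e.
Proof.
move=> hp e e0; have [d1 d10 h1] := hp 1 ltr01.
have K0 : 0 < Dn p + 1 by rewrite ltr_wpDl ?Dn_ge0.
set d := Num.min d1 (e / (Dn p + 1)).
have d0 : 0 < d by rewrite lt_min d10 divr_gt0.
exists d => // z hz.
have hz1 : near d1 z by apply: near_le hz; rewrite ge_min lexx.
have hk : forall k, nr (z k - z0 k) <= d by move=> k; apply/ltW/hz.
have := h1 z z0 d hz1 (near0 d10) (ltW d0) hk; rewrite mul1r => H.
have := lin_bound p hk => H2.
rewrite (id_cont _ _ (lin p (fun k => z k - z0 k))).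
apply: le_trans (nrD _ _) _.
apply: le_trans (lerD H H2) _.
have : d <= e / (Dn p + 1) by rewrite ge_min lexx orbT.
rewrite ler_pdivlMr // => hd.
by apply: le_trans hd; rewrite mulrDr mulr1 addrC mulrC.
Qed.


Lemma SD_C c : SD c%:MP.
Proof.
move=> e e0; exists 1 => // z w t _ _ t0 _.
rewrite /lin big1 ?mevalC ?subrr ?nr0 ?mulr_ge0 ?(ltW e0) //.
by move=> k _; rewrite mderivC meval0 mul0r.
Qed.

Lemma derivXU_eval (i k : 'I_N) (v : 'I_N -> C) :
  (('X_i : {mpoly C[N]})^`M(k)).@[v] = (i == k)%:R.
Proof.
rewrite mderivX mnm1E; case: eqP => [->|_]; last by rewrite scale0r meval0.
have -> : (U_(k) - U_(k))%MM = 0%MM :> 'X_{1..N} by apply/mnmP => j; rewrite mnmBE subnn mnm0E.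
by rewrite mpolyX0 mevalZ meval1 mulr1.
Qed.

Lemma SD_X i : SD 'X_i.
Proof.
move=> e e0; exists 1 => // z w t _ _ t0 _.
rewrite /lin (bigD1 i) //= big1 ?mevalXU.
  by rewrite derivXU_eval eqxx mul1r addr0 subrr nr0 mulr_ge0 ?(ltW e0).
by move=> k /negbTE ki; rewrite derivXU_eval eq_sym ki mul0r.
Qed.

Lemma lin_add p q h : lin (p + q) h = lin p h + lin q h.
Proof. by rewrite /lin -big_split; apply: eq_bigr => k _; rewrite mderivD mevalD mulrDl. Qed.

Lemma lin_mul p q h : lin (p * q) h = q.@[z0] * lin p h + p.@[z0] * lin q h.
Proof.
rewrite /lin !mulr_sumr -big_split; apply: eq_bigr => k _.
by rewrite mderivM mevalD !mevalM /= id_mul3.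
Qed.

Lemma SD_add p q : SD p -> SD q -> SD (p + q).
Proof.
move=> hp hq e e0.
have e20 : 0 < e / 2 by rewrite divr_gt0.
have [d1 d10 h1] := hp _ e20; have [d2 d20 h2] := hq _ e20.
exists (Num.min d1 d2); first by rewrite lt_min d10 d20.
move=> z w t hz hw t0 ht.
have hz1 : near d1 z by apply: near_le hz; rewrite ge_min lexx.
have hw1 : near d1 w by apply: near_le hw; rewrite ge_min lexx.
have hz2 : near d2 z by apply: near_le hz; rewrite ge_min lexx orbT.
have hw2 : near d2 w by apply: near_le hw; rewrite ge_min lexx orbT.
have H1 := h1 z w t hz1 hw1 t0 ht; have H2 := h2 z w t hz2 hw2 t0 ht.
rewrite lin_add !mevalD.
set a := _ - _ - lin p _ in H1; set b := _ - _ - lin q _ in H2.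
rewrite id_add -/a -/b.
apply: le_trans (nrD _ _) _; apply: le_trans (lerD H1 H2) _.
by rewrite -mulrDl -splitr.
Qed.


Lemma nr_le_add (x y : C) : nr x <= nr y + nr (x - y).
Proof. by have := nrD y (x - y); rewrite addrC subrK. Qed.

Lemma SD_mul p q : SD p -> SD q -> SD (p * q).
Proof.
move=> hp hq e e0.
set P := nr p.@[z0]; set Q := nr q.@[z0].
set K := P + Q + 2 + Dn p + Dn q.
have K0 : 0 < K.
  by rewrite /K ltr_wpDr ?Dn_ge0 // ltr_wpDr ?Dn_ge0 // ltr_wpDl ?addr_ge0 ?nr_ge0.
set e1 := Num.min 1 (e / K).
have e10 : 0 < e1 by rewrite lt_min ltr01 divr_gt0.
have e11 : e1 <= 1 by rewrite ge_min lexx.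
have e1K : e1 * K <= e.
  have : e1 <= e / K by rewrite ge_min lexx orbT.
  by rewrite ler_pdivlMr.
have [dp dp0 Hp] := hp _ e10; have [dq dq0 Hq] := hq _ e10.
have [cp cp0 Cp] := SD_cont hp e10; have [cq cq0 Cq] := SD_cont hq e10.
set d := Num.min (Num.min dp dq) (Num.min cp cq).
have dd : d <= dp /\ d <= dq /\ d <= cp /\ d <= cq.
  by rewrite /d !ge_min !lexx /= !orbT.
case: dd => ddp [ddq [dcp dcq]].
exists d; first by rewrite !lt_min dp0 dq0 cp0 cq0.
move=> z w t hz hw t0 ht.
have Ha := Hp z w t (near_le ddp hz) (near_le ddp hw) t0 ht.
have Hb := Hq z w t (near_le ddq hz) (near_le ddq hw) t0 ht.
have Hcp := Cp z (near_le dcp hz).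
have Hcq := Cq w (near_le dcq hw).
have HLp := lin_bound p ht; have HLq := lin_bound q ht.
set h := fun k => z k - w k in Ha Hb HLp HLq *.
set a := _ - _ - lin p h in Ha; set b := _ - _ - lin q h in Hb.
rewrite lin_mul !mevalM.
rewrite id_mul -/a -/b.
have Pz : nr p.@[z] <= P + 1.
  by apply: le_trans (nr_le_add _ p.@[z0]) _; rewrite lerD2l (le_trans Hcp).
have Qw : nr q.@[w] <= Q + 1.
  by apply: le_trans (nr_le_add _ q.@[z0]) _; rewrite lerD2l (le_trans Hcq).
have T1 : nr (p.@[z] * b) <= (P + 1) * (e1 * t) by rewrite nrM; exact: ler_pM (nr_ge0 _) (nr_ge0 _) Pz Hb.
have T2 : nr ((p.@[z] - p.@[z0]) * lin q h) <= e1 * (Dn q * t) by rewrite nrM; exact: ler_pM (nr_ge0 _) (nr_ge0 _) Hcp HLq.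
have T3 : nr (q.@[w] * a) <= (Q + 1) * (e1 * t) by rewrite nrM; exact: ler_pM (nr_ge0 _) (nr_ge0 _) Qw Ha.
have T4 : nr ((q.@[w] - q.@[z0]) * lin p h) <= e1 * (Dn p * t) by rewrite nrM; exact: ler_pM (nr_ge0 _) (nr_ge0 _) Hcq HLp.
have S := le_trans (nrD _ _) (lerD (le_trans (nrD _ _) (lerD (le_trans (nrD _ _) (lerD T1 T2)) T3)) T4).
apply: le_trans S _.
have : e1 * K * t <= e * t by rewrite ler_wpM2r.
rewrite /K; exact: arith_mul.
Qed.


Lemma SD_1 : SD 1.
Proof. by rewrite -mpolyC1; apply: SD_C. Qed.

Lemma SD_exp p k : SD p -> SD (p ^+ k).
Proof.
move=> hp; elim: k => [|k IH]; first by rewrite expr0; apply: SD_1.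
by rewrite exprS; apply: SD_mul.
Qed.

Lemma SD_mono m : SD 'X_[m].
Proof.
rewrite (mpolyXE_id C m).
apply: (big_ind SD SD_1 (fun x y hx hy => SD_mul hx hy)) => i _.
exact: SD_exp (SD_X i).
Qed.

Lemma SD_all p : SD p.
Proof.
elim/mpolyind: p => [|c m p _ _ IH]; first by rewrite -mpolyC0; apply: SD_C.
have h1 : SD (c%:MP * 'X_[m]) := SD_mul (SD_C c) (SD_mono m).
rewrite mul_mpolyC in h1.
exact: (SD_add h1 IH).
Qed.

End SD.

Local Open Scope classical_set_scope.
Section Lim.
Variable R : realType.
Local Notation C := (R[i]).

Definition hh (B : R) (k : nat) : R := B / 2 ^+ k.

Lemma hhS B k : hh B k.+1 * 2 = hh B k.
Proof.
rewrite /hh exprS invfM; field.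
by rewrite expf_eq0 pnatr_eq0 andbF.
Qed.

Lemma hh_ge0 B k : 0 <= B -> 0 <= hh B k.
Proof. by move=> B0; rewrite /hh divr_ge0 // exprn_ge0. Qed.

Lemma hh0 B : hh B 0 = B.
Proof. by rewrite /hh expr0 divr1. Qed.

Lemma hhM c B k : hh (c * B) k = c * hh B k.
Proof. by rewrite /hh mulrA. Qed.

Lemma tel (u : nat -> R) B : (forall k, `|u k.+1 - u k| <= hh B k) ->
  forall k m, `|u (k + m)%N - u k| <= 2 * hh B k - 2 * hh B (k + m)%N.
Proof.
move=> hu k; elim=> [|m IH]; first by rewrite addn0 subrr normr0 subrr.
rewrite addnS.
have h1 := hu (k + m)%N; have h2 := hhS B (k + m)%N.
have h3 := ler_normD (u (k + m).+1 - u (k + m)%N) (u (k + m)%N - u k).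
rewrite addrA subrK in h3.
lra.
Qed.

Definition climR (u : nat -> R) (B : R) : R :=
  sup [set y | exists k, y = u k - 2 * hh B k].

Lemma climR_spec (u : nat -> R) B : 0 <= B -> (forall k, `|u k.+1 - u k| <= hh B k) ->
  forall k, `|u k - climR u B| <= 2 * hh B k.
Proof.
move=> B0 hu.
have T := tel hu.
have key : forall k m, u k - 2 * hh B k <= u m + 2 * hh B m.
  move=> k m; case: (leqP k m) => [km|mk].
    have := T k (m - k)%N; rewrite subnKC // => H.
    have := hh_ge0 m B0; rewrite ler_norml in H; case/andP: H => H _; lra.
  have := T m (k - m)%N; rewrite subnKC ?(ltnW mk) // => H.
  have := hh_ge0 k B0; rewrite ler_norml in H; case/andP: H => _ H; lra.
set V := [set y | exists k, y = u k - 2 * hh B k].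
have ubV : forall m, ubound V (u m + 2 * hh B m).
  by move=> m y [k ->]; apply: key.
have neV : V !=set0 by exists (u 0%N - 2 * hh B 0); exists 0%N.
move=> k.
have H1 : u k - 2 * hh B k <= climR u B.
  by apply: ub_le_sup; [exists (u 0%N + 2 * hh B 0); apply: ubV | exists k].
have H2 : climR u B <= u k + 2 * hh B k by apply: ge_sup => //; apply: ubV.
rewrite ler_norml; apply/andP; split; lra.
Qed.

Definition climC (u : nat -> C) (B : R) : C :=
  Complex (climR (fun k => complex.Re (u k)) B) (climR (fun k => complex.Im (u k)) B).

Lemma climC_spec (u : nat -> C) B : 0 <= B -> (forall k, nr (u k.+1 - u k) <= hh B k) ->
  forall k, nr (u k - climC u B) <= 4 * hh B k.
Proof.
move=> B0 hu k.
have hre : forall k, `|complex.Re (u k.+1) - complex.Re (u k)| <= hh B k.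
  by move=> j; rewrite -raddfB; apply: le_trans (Re_le_nr _) (hu j).
have him : forall k, `|complex.Im (u k.+1) - complex.Im (u k)| <= hh B k.
  by move=> j; rewrite -raddfB; apply: le_trans (Im_le_nr _) (hu j).
have H1 := climR_spec B0 hre k; have H2 := climR_spec B0 him k.
apply: le_trans (nr_le_ReIm _) _.
rewrite raddfB raddfB /=.
have -> : (4 : R) * hh B k = 2 * hh B k + 2 * hh B k by ring.
exact: lerD.
Qed.

Lemma zero_of_geom (c K : R) : 0 <= c -> (forall k, c <= hh K k) -> c = 0.
Proof.
move=> c0 hk; apply/eqP; rewrite eq_le c0 andbT; apply/negP => /negP.
rewrite -ltNge => cp.
have K0 : 0 <= K by have := hk 0%N; rewrite hh0; apply: le_trans.
set x := K / c.
have := @upper_nthrootP R x (Num.Def.archi_bound x) (leqnn _).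
set k := Num.Def.archi_bound x => H.
have := hk k; rewrite /hh ler_pdivlMr ?exprn_gt0 // => H'.
have : K < 2 ^+ k * c by rewrite -ltr_pdivrMr.
by rewrite ltNge mulrC H'.
Qed.

End Lim.
Local Close Scope classical_set_scope.

Section Common.
Variable R : realType.

Lemma common_delta (I : finType) (P : I -> R -> Prop) :
  (forall i d d', 0 < d' -> d' <= d -> P i d -> P i d') ->
  (forall i, exists2 d, 0 < d & P i d) ->
  exists2 d, 0 < d & forall i, P i d.
Proof.
move=> mono h.
suff : forall r : seq I, exists2 d, 0 < d & forall i, i \in r -> P i d.
  by case/(_ (enum I)) => d d0 hd; exists d => // i; apply: hd; rewrite mem_enum.
elim=> [|i r [d d0 hd]]; first by exists 1.
have [di di0 hdi] := h i.
exists (Num.min d di); first by rewrite lt_min d0 di0.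
have m0 : 0 < Num.min d di by rewrite lt_min d0 di0.
move=> j; rewrite inE => /orP[/eqP ->|jr].
  by apply: mono hdi => //; rewrite ge_min lexx orbT.
by apply: mono (hd j jr) => //; rewrite ge_min lexx.
Qed.

End Common.

Section Join.
Variable R : realType.
Local Notation C := (R[i]).
Variables l n : nat.

Lemma id3 (a b c : C) : a = b + c + (a - b - c).
Proof. by ring. Qed.

Lemma joinv_l (a : 'I_l -> C) (x : 'I_n -> C) i : joinv a x (lshift n i) = a i.
Proof. by rewrite /joinv -[lshift n i]/(unsplit (inl i)) unsplitK. Qed.

Lemma joinv_r (a : 'I_l -> C) (x : 'I_n -> C) j : joinv a x (rshift l j) = x j.
Proof. by rewrite /joinv -[rshift l j]/(unsplit (inr j)) unsplitK. Qed.

Lemma near_join (a0 a : 'I_l -> C) (x0 x : 'I_n -> C) d :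
  (forall i, nr (a i - a0 i) < d) -> (forall j, nr (x j - x0 j) < d) ->
  near (joinv a0 x0) d (joinv a x).
Proof. by move=> ha hx k; rewrite /joinv; case: (split k). Qed.

Lemma join_diff (a : 'I_l -> C) (x y : 'I_n -> C) (t : R) : 0 <= t ->
  (forall j, nr (x j - y j) <= t) -> forall k, nr (joinv a x k - joinv a y k) <= t.
Proof. by move=> t0 h k; rewrite /joinv; case: (split k) => [i|j]; rewrite ?subrr ?nr0. Qed.

Lemma lin_join z0 (p : {mpoly C[l + n]}) (a : 'I_l -> C) (x y : 'I_n -> C) :
  lin z0 p (fun k => joinv a x k - joinv a y k) =
  \sum_j (p^`M(rshift l j)).@[z0] * (x j - y j).
Proof.
rewrite /lin big_split_ord /= big1 ?add0r.
  by apply: eq_bigr => j _; rewrite !joinv_r.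
by move=> i _; rewrite !joinv_l subrr mulr0.
Qed.

End Join.

Section Newton.
Variable R : realType.
Local Notation C := (R[i]).
Variables (l n s : nat) (F : 'I_s -> {mpoly C[l + n]}) (a0 : 'I_l -> C)
  (x0 : 'I_n -> C) (Q : 'I_n -> 'I_s -> C).
Local Notation z0 := (joinv a0 x0).
Hypothesis hF0 : forall i, (F i).@[z0] = 0.
Hypothesis hQ : forall i k,
  \sum_j ((F i)^`M(rshift l j)).@[z0] * Q j k = (i == k)%:R.
Hypothesis htor : forall j, x0 j != 0.

Definition MQ : R := 1 + \sum_j \sum_k nr (Q j k).

Lemma MQ_ge1 : 1 <= MQ.
Proof. by rewrite /MQ lerDl; do 2!(apply: sumr_ge0 => ? _); apply: nr_ge0. Qed.

Lemma Qbound j (v : 'I_s -> C) b : 0 <= b -> (forall k, nr (v k) <= b) ->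
  nr (\sum_k Q j k * v k) <= MQ * b.
Proof.
move=> b0 hv; apply: le_trans (nr_sum _) _.
apply: le_trans (_ : \sum_k nr (Q j k) * b <= _).
  by apply: ler_sum => k _; rewrite nrM ler_wpM2l ?nr_ge0.
rewrite -mulr_suml ler_wpM2r //.
apply: le_trans (_ : \sum_j \sum_k nr (Q j k) <= _); last by rewrite /MQ lerDr.
rewrite (bigD1 j) //= lerDl; apply: sumr_ge0 => j' _; apply: sumr_ge0 => k _.
exact: nr_ge0.
Qed.

Definition step a (x : 'I_n -> C) : 'I_n -> C :=
  fun j => x j - \sum_k Q j k * (F k).@[joinv a x].

Definition xs a k := iter k (step a) x0.

Lemma step_lin a x i :
  \sum_j ((F i)^`M(rshift l j)).@[z0] * (step a x j - x j) = - (F i).@[joinv a x].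
Proof.
rewrite (eq_bigr (fun j => - \sum_k ((F i)^`M(rshift l j)).@[z0] * Q j k * (F k).@[joinv a x])); last first.
  move=> j _; rewrite /step addrAC subrr add0r mulrN mulr_sumr.
  by congr (- _); apply: eq_bigr => k _; rewrite mulrA.
rewrite sumrN exchange_big /=; congr (- _).
rewrite (eq_bigr (fun k => (i == k)%:R * (F k).@[joinv a x])); last first.
  by move=> k _; rewrite -mulr_suml hQ.
rewrite (bigD1 i) //= eqxx mul1r big1 ?addr0 //.
by move=> k /negbTE; rewrite eq_sym => ->; rewrite mul0r.
Qed.


Lemma newton : exists2 e : R, 0 < e & forall a, (forall i, nr (a i - a0 i) < e) ->
  exists x, (forall j, x j != 0) /\ forall i, (F i).@[joinv a x] = 0.
Proof.
set M := MQ.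
have M1 : 1 <= M := MQ_ge1.
have M0 : 0 < M by apply: lt_le_trans M1.
set eps := (2 * M)^-1.
have eps0 : 0 < eps by rewrite invr_gt0 mulr_gt0.
have epsM : eps * M = 2^-1.
  by rewrite /eps; field; rewrite gt_eqF.
have hSD : forall i, SD z0 (F i) := fun i => SD_all z0 (F i).
have [dS dS0 HS] := common_delta
  (P := fun i d => forall z w (t : R), near z0 d z -> near z0 d w -> 0 <= t ->
     (forall k, nr (z k - w k) <= t) ->
     nr ((F i).@[z] - (F i).@[w] - lin z0 (F i) (fun k => z k - w k)) <= eps * t)
  (fun i d d' d'0 le h z w t hz hw => h z w t (near_le le hz) (near_le le hw))
  (fun i => hSD i eps eps0).
have nx0 : forall j, 0 < nr (x0 j).
  by move=> j; rewrite lt_def nr_eq0 htor nr_ge0.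
have [dT dT0 HT] := common_delta (P := fun j d => d <= nr (x0 j))
  (fun j d d' _ le h => le_trans le h)
  (fun j => ex_intro2 _ _ (nr (x0 j)) (nx0 j) (lexx _)).
set d := Num.min dS dT.
have d0 : 0 < d by rewrite lt_min dS0 dT0.
have ddS : d <= dS by rewrite ge_min lexx.
have ddT : d <= dT by rewrite ge_min lexx orbT.
set rho := d / (8 * M).
have rho0 : 0 < rho by rewrite divr_gt0 // mulr_gt0.
have MR : 8 * (M * rho) = d by rewrite /rho; field; rewrite gt_eqF.
have [c c0 HC] := common_delta
  (P := fun i d => forall z, near z0 d z -> nr ((F i).@[z] - (F i).@[z0]) <= rho)
  (fun i d d' _ le h z hz => h z (near_le le hz))
  (fun i => SD_cont (hSD i) rho0).
exists (Num.min c d); first by rewrite lt_min c0 d0.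
move=> a ha.
have hac : forall i, nr (a i - a0 i) < c.
  by move=> i; apply: lt_le_trans (ha i) _; rewrite ge_min lexx.
have had : forall i, nr (a i - a0 i) < d.
  by move=> i; apply: lt_le_trans (ha i) _; rewrite ge_min lexx orbT.
have Fv0 : forall i, nr (F i).@[joinv a x0] <= rho.
  have nx : forall j, nr (x0 j - x0 j) < c by move=> j; rewrite subrr nr0.
  by move=> i; have := HC i _ (near_join hac nx); rewrite hF0 subr0.
have hrho : forall k, 0 <= hh rho k by move=> k; apply: hh_ge0; apply: ltW.
have stepb : forall k, (forall i, nr (F i).@[joinv a (xs a k)] <= hh rho k) ->
    forall j, nr (xs a k.+1 j - xs a k j) <= M * hh rho k.
  move=> k hk j; rewrite [xs a k.+1]/xs iterS -/(xs a k) /step addrAC subrr add0r nrN.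
  exact: Qbound.
have inv : forall k, (forall i, nr (F i).@[joinv a (xs a k)] <= hh rho k) /\ (forall j, nr (xs a k j - x0 j) <= 2 * (M * rho) - 2 * (M * hh rho k)).
  elim=> [|k [IH1 IH2]].
    split=> [i|j]; first by rewrite hh0; apply: Fv0.
    by rewrite hh0 /= subrr nr0 subrr.
  have sb := stepb k IH1.
  have IH2' : forall j, nr (xs a k.+1 j - x0 j) <= 2 * (M * rho) - 2 * (M * hh rho k.+1).
    move=> j; have := nrD (xs a k.+1 j - xs a k j) (xs a k j - x0 j).
    rewrite addrA subrK => H; apply: le_trans H _.
    have := sb j; have := IH2 j; have := hhS rho k.
    move: (hh rho k) (hh rho k.+1) => u v; nra.
  split=> // i.
  have hMh : forall k, 0 <= M * hh rho k by move=> k'; rewrite mulr_ge0 ?hrho ?ltW.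
  have nearx : forall k, (forall j, nr (xs a k j - x0 j) <= 2 * (M * rho) - 2 * (M * hh rho k)) ->
      near z0 dS (joinv a (xs a k)).
    move=> k' hk'; apply: near_le ddS _; apply: near_join => // j.
    apply: le_lt_trans (hk' j) _; have := hMh k'; lra.
  have := HS i _ _ _ (nearx _ IH2') (nearx _ IH2) (hMh k) (join_diff a (hMh k) sb).
  rewrite lin_join step_lin opprK subrK.
  have -> : eps * (M * hh rho k) = hh rho k.+1.
    by rewrite mulrA epsM -(hhS rho k); field.
  done.
have MR0 : 0 <= M * rho by rewrite mulr_ge0 ?ltW.
set xst := fun j => climC (fun k => xs a k j) (M * rho).
have lim : forall k j, nr (xs a k j - xst j) <= 4 * hh (M * rho) k.
  move=> k j; apply: (climC_spec MR0 (u := fun k => xs a k j)) => k'.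
  by rewrite hhM; apply: stepb; case: (inv k').
have lim0 : forall j, nr (xst j - x0 j) <= d / 2.
  move=> j; have := lim 0%N j; rewrite hh0 /= nrB => H; apply: le_trans H _.
  rewrite -MR; lra.
have near_st : near z0 dS (joinv a xst).
  apply: near_le ddS _; apply: near_join => // j.
  apply: le_lt_trans (lim0 j) _; lra.
have near_xs : forall k, near z0 dS (joinv a (xs a k)).
  move=> k; apply: near_le ddS _; apply: near_join => // j.
  case: (inv k) => _ /(_ j) H; apply: le_lt_trans H _.
  have : 0 <= M * hh rho k by rewrite mulr_ge0 ?hrho ?ltW.
  rewrite -MR; lra.
exists xst; split.
  move=> j; apply/negP => /eqP x0e.
  have := lim0 j; rewrite x0e sub0r nrN => H.
  have := HT j; have := ddT; lra.
move=> i; apply/eqP; rewrite -nr_eq0; apply/eqP.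
apply: (zero_of_geom (K := rho + (Dn z0 (F i) + eps) * (4 * (M * rho)))) => [|k].
  exact: nr_ge0.
have t0 : 0 <= 4 * hh (M * rho) k by rewrite mulr_ge0 // hh_ge0.
have hd : forall j, nr (xst j - xs a k j) <= 4 * hh (M * rho) k.
  by move=> j; rewrite nrB; apply: lim.
have := HS i _ _ _ near_st (near_xs k) t0 (join_diff a t0 hd).
have HL := @lin_bound _ _ z0 (F i) _ _ (join_diff a t0 hd).
case: (inv k) => /(_ i) Hw _.
set Fz := (F i).@[_]; set Fw := (F i).@[joinv a (xs a k)].
set L := lin _ _ _ => H.
have : nr Fz <= nr Fw + nr L + nr (Fz - Fw - L).
  have E : Fz = Fw + L + (Fz - Fw - L) by exact: id3.
  rewrite {1}E; apply: le_trans (nrD _ _) _; rewrite lerD2r; exact: nrD.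
move=> H2; apply: le_trans H2 _.
have -> : hh (rho + (Dn z0 (F i) + eps) * (4 * (M * rho))) k
  = hh rho k + (Dn z0 (F i) + eps) * (4 * hh (M * rho) k) by rewrite /hh; ring.
rewrite -addrA lerD // mulrDl lerD //.
Qed.

End Newton.

Lemma cballE (R : realType) m (z : 'I_m -> R[i]) e w :
  cball z e w <-> forall i, nr (w i - z i) < e.
Proof. by split => h i; have := h i; rewrite nrE ltcR. Qed.

Lemma xmon_neq0 (R : realType) n (d : 'I_n -> nat) (x : 'I_n -> R[i]) :
  torus x -> xmon d x != 0.
Proof.
move=> tx; rewrite /xmon; apply: (big_ind (fun y => y != 0)) => //.
  exact: oner_neq0.
  by move=> y y' hy hy'; rewrite mulf_neq0.
by move=> j _; rewrite invr_neq0 // expf_neq0 // tx.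
Qed.

Lemma local_solve (R : realType) (l n s : nat) (g : 'I_s -> lpoly R l n) a0 x0 :
  nondegenerate_solution g a0 x0 ->
  exists2 e : R, 0 < e & forall a, (forall i, nr (a i - a0 i) < e) ->
    exists x, is_solution g a x.
Proof.
move=> [[tor sol] rk].
set F := fun i => lp_num (g i).
set m := fun i => xmon (lp_shift (g i)) x0.
have m0 : forall i, m i != 0 by move=> i; apply: xmon_neq0.
have F0 : forall i, (F i).@[joinv a0 x0] = 0.
  move=> i; have := sol i; rewrite /lpeval => /eqP; rewrite mulf_eq0 (negbTE (m0 i)) orbF.
  by move/eqP.
have : row_free (jacobian_x g a0 x0) by rewrite /row_free rk.
case/row_freeP => B hB.
set Q := fun j k => B j k * m k.
have hJ : forall i j, jacobian_x g a0 x0 i j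
    = ((F i)^`M(rshift l j)).@[joinv a0 x0] * m i.
  by move=> i j; rewrite mxE /lpderiv_x -/(F i) F0 mulr0 mul0r mul0r subr0.
have hQ : forall i k,
    \sum_j ((F i)^`M(rshift l j)).@[joinv a0 x0] * Q j k = (i == k)%:R.
  move=> i k.
  have := congr1 (fun M : 'M[R[i]]_s => M i k) hB; rewrite !mxE /=.
  under eq_bigr do rewrite hJ.
  move=> H.
  have H' : \sum_j ((F i)^`M(rshift l j)).@[joinv a0 x0] * B j k = (i == k)%:R / m i.
    apply: (mulIf (m0 i)); rewrite mulfVK // -H mulr_suml.
    by apply: eq_bigr => j _; rewrite mulrAC.
  rewrite /Q (eq_bigr (fun j => ((F i)^`M(rshift l j)).@[joinv a0 x0] * B j k * m k)); last first.
    by move=> j _; rewrite mulrA.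
  rewrite -mulr_suml H'; case: eqP => [->|_]; last by rewrite mul0r mul0r.
  by rewrite mul1r mulVf.
have [e e0 He] := newton F0 hQ tor.
exists e => // a ha; have [x [tx hx]] := He a ha.
exists x; split => // i; rewrite /lpeval -/(F i) hx mul0r //.
Qed.

Unset Implicit Arguments.
Theorem mainTheorem6 (R : realType) (l n s : nat) (g : 'I_s -> lpoly R l n)
    (A : ('I_l -> R[i]) -> Prop) :
  (exists a0, A a0 /\ exists x0, nondegenerate_solution g a0 x0) ->
  nonempty_interior_in (Dset g A) A /\
  (locally_zariski_dense A -> zariski_dense (Dset g A)).
Proof.
move=> [a0 [Aa0 [x0 nd]]].
have [e e0 He] := local_solve nd.
have sub : forall w, cball a0 e w -> A w -> Dset g A w.
  by move=> w /cballE hw Aw; split => //; apply: He.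
split; first by exists a0; split => //; exists e.
move=> lzd p hp.
have op : euclid_open (cball a0 e).
  move=> z /cballE hz.
  have hpos : forall i, 0 < e - nr (z i - a0 i) by move=> i; rewrite subr_gt0 hz.
  have [e' e'0 He'] := common_delta (P := fun i d => d <= e - nr (z i - a0 i))
    (fun i d d' _ le h => le_trans le h)
    (fun i => ex_intro2 _ _ (e - nr (z i - a0 i)) (hpos i) (lexx _)).
  exists e' => // w /cballE hw; apply/cballE => i.
  have := nrD (w i - z i) (z i - a0 i); rewrite addrA subrK => H.
  apply: le_lt_trans H _; have := hw i; have := He' i; lra.
have c0 : cball a0 e a0 by apply/cballE => i; rewrite subrr nr0.
apply: (lzd _ op (ex_intro _ a0 (conj c0 Aa0))).
by move=> z [hz Az]; apply: hp; exact: sub.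
Qed.
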